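(* Let $X$ be the Riemannian universal covering of a compact Riemannian manifold $M=X/\Gamma$, and let $\{U_n\}$ be a sequence of subsets of $X$ with $\lim_n|\partial_dU_n|/|U_n|=0$ for all $d>0$. Then for every $r>0$ there is an index $n_0=n_0(r)$ such that for every $n\ge n_0$ the set $U_n$ contains a metric ball of radius $r$. Moreover, if $\{V_n\}$ is an approximation of $\{U_n\}$, then also $\lim_n|\partial_dV_n|/|V_n|=0$ for all $d>0$.
   Context: $\partial_dU=\{x\in X:d(x,\partial U)\le d\}$; $|\cdot|$ is Riemannian volume. $\{V_n\}$ (open sets) is an approximation of $\{U_n\}$ if there is a fixed $h>0$ with $U_n\,\Delta\,V_n\subset\partial_hU_n$ for all $n$. *)

(* Defs.v *)
From HB Require Import structures.
From mathcomp Require Import all_boot all_order all_algebra.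
From mathcomp Require Import all_classical all_reals all_analysis.
Set Implicit Arguments. Unset Strict Implicit. Unset Printing Implicit Defensive.
Import Order.TTheory GRing.Theory Num.Theory.
Local Open Scope classical_set_scope.
Local Open Scope ring_scope.

Section MetricDefs.
Context {R : realType} {X : Type} (dist : X -> X -> R).

Definition is_metric : Prop :=
  [/\ forall x y, dist x y = 0 <-> x = y,
      forall x y, dist x y = dist y x &
      forall x y z, dist x z <= dist x y + dist y z].

(* geodesic space: any two points are joined by a minimizing geodesic
   (true for a complete Riemannian manifold by Hopf--Rinow) *)
Definition geodesic_space : Prop :=
  forall x y, exists g : R -> X, [/\ g 0 = x, g 1 = y &
    forall s t, 0 <= s <= 1 -> 0 <= t <= 1 ->
      dist (g s) (g t) = `|s - t| * dist x y].

Definition mball (c : X) (r : R) : set X := [set y | dist c y < r].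

Definition mopen (A : set X) : Prop :=
  forall x, A x -> exists2 e, 0 < e & mball x e `<=` A.

Definition mclosure (A : set X) : set X :=
  [set x | forall e, 0 < e -> exists2 y, A y & dist x y < e].

Definition mboundary (A : set X) : set X := mclosure A `&` mclosure (~` A).

(* distance from a point to a set (inf over the empty set is +oo) *)
Definition dist_set (x : X) (A : set X) : \bar R :=
  ereal_inf [set (dist x y)%:E | y in A].

(* \partial_d U = { x : d(x, \partial U) <= d } *)
Definition bnbhd (d : R) (U : set X) : set X :=
  [set x | (dist_set x (mboundary U) <= d%:E)%E].

End MetricDefs.

Definition is_approximation {R : realType} {X : Type} (dist : X -> X -> R)
  (U V : nat -> set X) : Prop :=
  (forall n, mopen dist (V n)) /\
  exists2 h : R, 0 < h & forall n,
    ((U n `\` V n) `|` (V n `\` U n)) `<=` bnbhd dist h (U n).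

Definition boundary_ratio_vanishes {R : realType} {d0 : measure_display}
  {X : measurableType d0} (dist : X -> X -> R)
  (mu : {measure set X -> \bar R}) (U : nat -> set X) : Prop :=
  forall d : R, 0 < d ->
    ((fun n => (mu (bnbhd dist d (U n)) / mu (U n))%E) @ \oo --> 0%E).

(* Main.v *)
Require Import Defs.
From HB Require Import structures.
From mathcomp Require Import all_boot all_order all_algebra.
From mathcomp Require Import all_classical all_reals all_analysis.
Import Order.TTheory GRing.Theory Num.Theory.
Local Open Scope classical_set_scope.
Local Open Scope ring_scope.
From mathcomp Require Import lra.

Section Geo.
Variables (R : realType) (X : Type) (dist : X -> X -> R).
Hypothesis Hm : is_metric dist.
Hypothesis Hg : geodesic_space dist.

Lemma dxx x : dist x x = 0.
Proof. by case: Hm => H _ _; apply/H. Qed.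

Lemma dsym x y : dist x y = dist y x.
Proof. by case: Hm. Qed.

Lemma dtri x y z : dist x z <= dist x y + dist y z.
Proof. by case: Hm. Qed.

Lemma dge0 x y : 0 <= dist x y.
Proof. have := dtri x y x; rewrite dxx (dsym y x); lra. Qed.

Lemma ds_le B x y : B y -> (dist_set dist x B <= (dist x y)%:E)%E.
Proof. by move=> By; apply: ereal_inf_lbound; exists y. Qed.

Lemma ds_tri B x y :
  (dist_set dist x B <= (dist x y)%:E + dist_set dist y B)%E.
Proof.
rewrite -leeBlDl //; apply: le_ereal_inf_tmp => _ [z Bz <-].
rewrite leeBlDl //; apply: le_trans (ds_le _ x _ Bz) _.
by rewrite -EFinD lee_fin dtri.
Qed.

Lemma ds_sub (B C : set X) h x :
  (forall y, B y -> (dist_set dist y C <= h%:E)%E) ->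
  (dist_set dist x C <= dist_set dist x B + h%:E)%E.
Proof.
move=> HB; rewrite addeC -leeBlDl //; apply: le_ereal_inf_tmp => _ [y By <-].
rewrite leeBlDl //; apply: le_trans (ds_tri C x y) _.
by rewrite addeC; apply: leeD2r; apply: HB.
Qed.

Lemma aux_lt (t D e : R) : 0 <= D -> 0 < e -> 0 <= t -> t <= e / (D + 1) ->
  t * D < e.
Proof.
move=> D0 e0 t0 te.
have : t * (D + 1) <= e by rewrite -ler_pdivlMr // ltr_wpDl.
have [->|tpos] := eqVneq t 0; first by move=> _; rewrite mul0r.
have : 0 < t by rewrite lt_def tpos t0.
nra.
Qed.

Lemma cross (U : set X) x y : U x -> ~ U y ->
  exists2 b, mboundary dist U b & dist x b <= dist x y.
Proof.
move=> Ux nUy; have [g [g0 g1 gd]] := Hg x y.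
set D := dist x y.
have D0 : 0 <= D by apply: dge0.
pose S := [set s : R | (0 <= s <= 1) /\ ~ U (g s)].
have S1 : S 1 by split; [rewrite ler01 lexx | rewrite g1].
have lbS : has_lbound S by exists 0 => s [/andP[]].
have hinf : has_inf S by split; [exists 1|].
set s := inf S.
have s0 : 0 <= s by apply: lb_le_inf; [exists 1|move=> t [/andP[]]].
have s1 : s <= 1 by apply: ge_inf.
have gsd : forall a b, 0 <= a <= 1 -> 0 <= b <= 1 ->
   dist (g a) (g b) = `|a - b| * D by move=> a b ha hb; rewrite gd.
have k0 : forall e, 0 < e -> 0 < e / (D + 1).
  by move=> e e0; apply: divr_gt0 => //; lra.
exists (g s); first split.
- move=> e e0.
  have [hs|hs] := leP s (e / (D + 1)).
    exists x => //; rewrite -g0 gsd ?s0 ?s1 ?ler01 ?lexx //.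
    by rewrite subr0 ger0_norm //; apply: aux_lt.
  set t := s - e / (D + 1).
  have ht : 0 <= t <= 1 by apply/andP; split; have := k0 e e0; rewrite /t; lra.
  exists (g t).
    apply: contrapT => nU.
    have : s <= t by apply: ge_inf => //; split.
    have := k0 e e0; rewrite /t; lra.
  rewrite gsd ?s0 ?s1 //= /t opprB addrC subrK ger0_norm; last by have := k0 e e0; lra.
  by apply: aux_lt => //; have := k0 e e0; lra.
- move=> e e0.
  have [s' [hs' nU] lt] := inf_adherent (k0 e e0) hinf.
  exists (g s') => //.
  have ss' : s <= s' by apply: ge_inf => //; split.
  rewrite gsd ?s0 ?s1 // distrC ger0_norm; last by lra.
  by apply: aux_lt => //; lra.
- rewrite -g0 gsd ?s0 ?s1 ?ler01 ?lexx // sub0r normrN ger0_norm //.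
  by rewrite -{2}(mul1r D) ler_wpM2r.
Qed.


Lemma bnbhd_openC d (U : set X) : mopen dist (~` bnbhd dist d U).
Proof.
move=> x /= hx.
have hlt : (d%:E < dist_set dist x (mboundary dist U))%E by rewrite ltNge; apply/negP.
have Ht := fun y => ds_tri (mboundary dist U) x y.
move: hlt Ht; case: (dist_set dist x _) => [v| |] hlt Ht //.
- exists (v - d); first by rewrite subr_gt0 -lte_fin.
  move=> y /= dy Hy; have := Ht y.
  have : ((dist x y)%:E + dist_set dist y (mboundary dist U) <= (dist x y + d)%:E)%E.
    by rewrite EFinD; apply: leeD2l.
  move=> /[swap] /le_trans /[apply]; rewrite lee_fin; move: dy; rewrite /mball /=; lra.
- exists 1; first by [].
  move=> y /= dy Hy; have := Ht y.
  have : ((dist x y)%:E + dist_set dist y (mboundary dist U) <= (dist x y + d)%:E)%E.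
    by rewrite EFinD; apply: leeD2l.
  by move=> /[swap] /le_trans /[apply]; rewrite leye_eq.
Qed.

Lemma noball_sub (U : set X) r : 0 < r ->
  ~ (exists c, mball dist c r `<=` U) -> U `<=` bnbhd dist r U.
Proof.
move=> r0 nb x Ux.
have : ~ (mball dist x r `<=` U) by move=> H; apply: nb; exists x.
move=> /existsNP [y /not_implyP [dy nUy]].
have [b bb db] := cross _ _ _ Ux nUy.
rewrite /bnbhd /=; apply: le_trans (ds_le _ x _ bb) _.
by rewrite lee_fin; move: dy; rewrite /mball /=; lra.
Qed.

Lemma mboundaryC (U : set X) : mboundary dist (~` U) = mboundary dist U.
Proof. by rewrite /mboundary setCK setIC. Qed.

Lemma bdV_sub (U V : set X) h : 0 < h ->
  ((U `\` V) `|` (V `\` U)) `<=` bnbhd dist h U ->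
  mboundary dist V `<=` bnbhd dist h U.
Proof.
move=> h0 HUV x [clV clnV].
have [D|nD] := pselect (((U `\` V) `|` (V `\` U)) x); first exact: HUV.
rewrite /bnbhd /=; apply/lee_addgt0Pr => e e0.
have [Ux|nUx] := pselect (U x).
- have Vx : V x by apply: contrapT => nV; apply: nD; left.
  have [z nVz dz] := clnV e e0.
  have [Uz|nUz] := pselect (U z).
    apply: le_trans (ds_tri _ x z) _; rewrite addeC.
    apply: leeD; first by apply: HUV; left.
    by rewrite lee_fin ltW.
  have [b bb db] := cross _ _ _ Ux nUz.
  apply: le_trans (ds_le _ x _ bb) _; rewrite -EFinD lee_fin.
  have := dge0 x b; lra.
- have nVx : ~ V x by move=> Vx; apply: nD; right.
  have [z Vz dz] := clV e e0.
  have [Uz|nUz] := pselect (U z).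
    have nnUz : ~ (~` U) z by [].
    have [b bb db] := @cross (~` U) x z nUx nnUz.
    rewrite mboundaryC in bb.
    apply: le_trans (ds_le _ x _ bb) _; rewrite -EFinD lee_fin.
    have := dge0 x b; lra.
  apply: le_trans (ds_tri _ x z) _; rewrite addeC.
  apply: leeD; first by apply: HUV; right.
  by rewrite lee_fin ltW.
Qed.

Lemma bnbhd_sub (U V : set X) h d : 0 < h ->
  ((U `\` V) `|` (V `\` U)) `<=` bnbhd dist h U ->
  bnbhd dist d V `<=` bnbhd dist (d + h) U.
Proof.
move=> h0 HUV x; rewrite /bnbhd /= => hx; rewrite EFinD.
apply: le_trans (ds_sub (mboundary dist V) _ h x _) _; first exact: bdV_sub HUV.
exact: leeD2r.
Qed.

End Geo.

Lemma ratio_fin (R : realType) (x : \bar R) (u : R) : (0 <= x)%E -> 0 < u ->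
  (x / u%:E)%E \is a fin_num ->
  exists b, [/\ x = b%:E, 0 <= b & fine (x / u%:E)%E = b / u].
Proof.
move=> x0 u0; rewrite inver gt_eqF //.
case: x x0 => [b| |] //= b0 hf.
  by exists b; split => //; rewrite lee_fin in b0.
by move: hf; rewrite mulyr gtr0_sg ?invr_gt0 // mul1e.
Qed.

Arguments ratio_fin {R x u}.

Lemma bn_meas (R : realType) (d0 : measure_display) (X : measurableType d0)
  (dist : X -> X -> R) (Hm : is_metric dist)
  (Hborel : forall A : set X, mopen dist A -> measurable A) d (U : set X) :
  measurable (bnbhd dist d U).
Proof.
rewrite -(setCK (bnbhd dist d U)); apply: measurableC; apply: Hborel.
exact: bnbhd_openC.
Qed.

Theorem lemma2p5 (R : realType) (d0 : measure_display) (X : measurableType d0)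
  (dist : X -> X -> R) (mu : {measure set X -> \bar R})
  (Hmetric : is_metric dist) (Hgeod : geodesic_space dist)
  (Hborel : forall A : set X, mopen dist A -> measurable A)
  (U : nat -> set X)
  (HUmeas : forall n, measurable (U n))
  (HUpos : forall n, (0 < mu (U n) < +oo)%E)
  (HU : boundary_ratio_vanishes dist mu U) :
  (forall r : R, 0 < r -> exists n0 : nat, forall n, (n0 <= n)%N ->
      exists c : X, mball dist c r `<=` U n) /\
  (forall V : nat -> set X, is_approximation dist U V ->
      boundary_ratio_vanishes dist mu V).
Proof.
have h2 : (0:R) < 1/2 by lra.
have fin_of : forall (x : \bar R) (c : R), (0 <= x)%E -> (x <= c%:E)%E ->
    exists2 y : R, x = y%:E & 0 <= y.
  move=> [y| |] c.
  - by rewrite lee_fin => y0 _; exists y.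
  - by move=> _; rewrite leye_eq.
  - by rewrite leeNy_eq.
have getu : forall n, exists2 u : R, 0 < u & mu (U n) = u%:E.
  move=> n; move: (HUpos n); case: (mu (U n)) => [u| |] /andP[a b].
  - by exists u.
  - by rewrite ltxx in b.
  - by [].
split.
- move=> r r0.
  have /fine_cvgP [Hf Hc] := HU r r0.
  move/cvgrPdist_le : Hc => /(_ (1/2) h2) Hc.
  have : \forall n \near \oo, exists c, mball dist c r `<=` U n.
    near=> n.
    apply: contrapT => nb.
    have sub := @noball_sub R X dist Hmetric Hgeod (U n) r r0 nb.
    have Hmb := @bn_meas R d0 X dist Hmetric Hborel r (U n).
    have le := le_measure mu (mem_set (HUmeas n)) (mem_set Hmb) sub.
    have hfin : (mu (bnbhd dist r (U n)) / mu (U n))%E \is a fin_num.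
      by near: n; exact: Hf.
    have hc : `|0 - fine (mu (bnbhd dist r (U n)) / mu (U n))%E| <= 1/2.
      by near: n; exact: Hc.
    have [u u0 Eu] := getu n.
    rewrite Eu in hfin hc le.
    have [b [Eb b0 Fb]] := ratio_fin (measure_ge0 _ _) u0 hfin.
    move: hc le; rewrite Fb Eb => hc le. have : (u%:E <= b%:E)%E by rewrite -Eu. rewrite lee_fin => {}le. move: hc; rewrite sub0r normrN ger0_norm; last by rewrite divr_ge0 // ltW.
    rewrite ler_pdivrMr //; lra.
  by case=> n0 _ H; exists n0 => n; apply: H.
- move=> V [Vopen [h h0 HUV]] d dpos.
  have key : forall eps : R, 0 < eps -> \forall n \near \oo, exists p v,
      [/\ mu (bnbhd dist d (V n)) = p%:E, mu (V n) = v%:E, 0 < v, 0 <= p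
        & p / v <= eps].
    move=> eps e0.
    have /fine_cvgP [Hf1 Hc1] := HU h h0.
    move/cvgrPdist_le : Hc1 => /(_ (1/2) h2) Hc1.
    have dh0 : 0 < d + h by rewrite addr_gt0.
    have /fine_cvgP [Hf2 Hc2] := HU (d + h) dh0.
    move/cvgrPdist_le : Hc2 => /(_ (eps/2)) Hc2.
    have e20 : 0 < eps / 2 by rewrite divr_gt0.
    move: (Hc2 e20) => {}Hc2.
    near=> n.
    have hf1 : (mu (bnbhd dist h (U n)) / mu (U n))%E \is a fin_num.
      by near: n; exact: Hf1.
    have hc1 : `|0 - fine (mu (bnbhd dist h (U n)) / mu (U n))%E| <= 1/2.
      by near: n; exact: Hc1.
    have hf2 : (mu (bnbhd dist (d + h) (U n)) / mu (U n))%E \is a fin_num.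
      by near: n; exact: Hf2.
    have hc2 : `|0 - fine (mu (bnbhd dist (d + h) (U n)) / mu (U n))%E| <= eps / 2.
      by near: n; exact: Hc2.
    have MB := @bn_meas R d0 X dist Hmetric Hborel h (U n).
    have MA := @bn_meas R d0 X dist Hmetric Hborel (d + h) (U n).
    have MP := @bn_meas R d0 X dist Hmetric Hborel d (V n).
    have MV := Hborel _ (Vopen n).
    have sV : V n `<=` U n `|` bnbhd dist h (U n).
      move=> x Vx; have [Ux|nUx] := pselect (U n x); first by left.
      by right; apply: HUV; right.
    have sU : U n `<=` V n `|` bnbhd dist h (U n).
      move=> x Ux; have [Vx|nVx] := pselect (V n x); first by left.
      by right; apply: HUV; left.
    have leV := le_measure mu (mem_set MV) (mem_set (measurableU _ _ (HUmeas n) MB)) sV.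
    have leU := le_measure mu (mem_set (HUmeas n)) (mem_set (measurableU _ _ MV MB)) sU.
    have leP := le_measure mu (mem_set MP) (mem_set MA)
      (@bnbhd_sub R X dist Hmetric Hgeod (U n) (V n) h d h0 (HUV n)).
    have uV := le_trans leV (measureU2 mu (HUmeas n) MB).
    have uU := le_trans leU (measureU2 mu MV MB).
    have [u u0 Eu] := getu n.
    rewrite Eu in hf1 hc1 hf2 hc2.
    have [bh [Eb b0 Fb]] := ratio_fin (measure_ge0 _ _) u0 hf1.
    have [a [Ea a0 Fa]] := ratio_fin (measure_ge0 _ _) u0 hf2.
    have hb : bh <= 1/2 * u.
      rewrite -ler_pdivrMr //; move: hc1; rewrite Fb sub0r normrN.
      by apply: le_trans; exact: ler_norm.
    have ha : a <= eps/2 * u.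
      rewrite -ler_pdivrMr //; move: hc2; rewrite Fa sub0r normrN.
      by apply: le_trans; exact: ler_norm.
    have uV' : (mu (V n) <= (u + bh)%:E)%E by rewrite EFinD -Eu -Eb; exact: uV.
    have uU' : (u%:E <= mu (V n) + bh%:E)%E by rewrite -Eu -Eb; exact: uU.
    have leP' : (mu (bnbhd dist d (V n)) <= a%:E)%E by rewrite -Ea; exact: leP.
    have [v Ev v0] := fin_of _ _ (measure_ge0 mu (V n)) uV'.
    have [p Ep p0] := fin_of _ _ (measure_ge0 mu (bnbhd dist d (V n))) leP'.
    rewrite Ev lee_fin in uV'; rewrite Ev -EFinD lee_fin in uU'; rewrite Ep lee_fin in leP'.
    have vpos : 0 < v by lra.
    exists p, v; split => //.
    by rewrite ler_pdivrMr //; nra.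
  apply/fine_cvgP; split.
    have := key 1 ltr01; apply: filterS => n [p [v [Ep Ev v0 _ _]]] /=.
    by rewrite Ep Ev inver gt_eqF.
  apply/cvgrPdist_le => eps e0; have := key eps e0.
  apply: filterS => n [p [v [Ep Ev v0 p0 le]]] /=.
  by rewrite Ep Ev inver gt_eqF //= sub0r normrN ger0_norm // divr_ge0 // ltW.
Unshelve. all: by end_near.
Qed.
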